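(* Let $g,h\in\mathbb{F}[x]$ and let $\theta:A_h\to A_g$ be an $\mathbb{F}$-algebra isomorphism. Then $\theta(h)=\lambda g$ for some $\lambda\in\mathbb{F}^*$ (here $h\in\mathbb{F}[x]\subseteq A_h$ and $g\in\mathbb{F}[x]\subseteq A_g$).
   Context: $\mathbb{F}$ is an arbitrary field. For $h\in\mathbb{F}[x]$, $A_h$ is the unital associative $\mathbb{F}$-algebra generated by $x,\hat y$ with defining relation $\hat yx-x\hat y=h$; $\mathbb{F}[x]$ is naturally a subalgebra of $A_h$. *)

(* Defs.v *)
From HB Require Import structures.
From mathcomp Require Import all_boot all_order all_algebra.
Set Implicit Arguments. Unset Strict Implicit. Unset Printing Implicit Defensive.
Import Order.TTheory GRing.Theory Num.Theory.
Local Open Scope ring_scope.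

Definition peval (F : fieldType) (A : algType F) (p : {poly F}) (a : A) : A :=
  horner_alg a p.

(* (A, x, y) is a presentation of A_h = F<x, y> / (y x - x y - h(x)):
   the relation holds and (A, x, y) is universal (initial) among unital
   associative F-algebras with two elements satisfying the relation. *)
Definition is_Ah (F : fieldType) (h : {poly F}) (A : algType F) (x y : A) : Prop :=
  y * x - x * y = peval h x /\
  forall (C : algType F) (a b : C), b * a - a * b = peval h a ->
    exists f : {lrmorphism A -> C},
      [/\ f x = a, f y = b &
          forall f' : {lrmorphism A -> C}, f' x = a -> f' y = b -> f' =1 f].

(* Main.v *)
Require Import Defs.
From HB Require Import structures.
From mathcomp Require Import all_boot all_order all_algebra.
From mathcomp Require Import boolp ring zify.
Set Implicit Arguments. Unset Strict Implicit. Unset Printing Implicit Defensive.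
Import GRing.Theory.
Local Open Scope ring_scope.

Record subsp (F : fieldType) (V : lmodType F) := Subsp {
  sp :> V -> Prop;
  sp0 : sp 0;
  splin : forall (a : F) u v, sp u -> sp v -> sp (a *: u + v) }.

Record endo (F : fieldType) (V : lmodType F) (S : subsp V) (v0 : V) (nz0 : v0 != 0) := Endo {
  efun :> V -> V;
  efun_lin : forall (a : F) u v, efun (a *: u + v) = a *: efun u + efun v;
  efun_P : forall v, S v -> S (efun v) }.

Section Endo.
Variables (F : fieldType) (V : lmodType F) (S : subsp V) (v0 : V) (nz0 : v0 != 0).
Local Notation E := (@endo F V S v0 nz0).

Lemma endo_ext (f g : E) : efun f =1 efun g -> f = g.
Proof.
case: f g => f1 l1 p1 [f2 l2 p2] /= /funext Ef; subst f2.
by rewrite (Prop_irrelevance l1 l2) (Prop_irrelevance p1 p2).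
Qed.

HB.instance Definition _ := gen_eqMixin E.
HB.instance Definition _ := gen_choiceMixin E.

Lemma efun_add (f : E) u v : f (u + v) = f u + f v.
Proof. have := efun_lin f 1 u v. rewrite !scale1r. done. Qed.
Lemma efun0 (f : E) : f 0 = 0.
Proof.
have h := efun_lin f 1 0 0; rewrite scale1r addr0 in h; rewrite scale1r in h.
by apply: (@addrI _ (f 0)); rewrite addr0 -h.
Qed.
Lemma efun_scale (f : E) a u : f (a *: u) = a *: f u.
Proof. by have := efun_lin f a u 0; rewrite !addr0 efun0 addr0. Qed.
Lemma efun_opp (f : E) u : f (- u) = - f u.
Proof. by rewrite -scaleN1r efun_scale scaleN1r. Qed.

Lemma spD u v : S u -> S v -> S (u + v).
Proof. by move=> Hu Hv; have := splin 1 Hu Hv; rewrite scale1r. Qed.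
Lemma spZ a u : S u -> S (a *: u).
Proof. by move=> Hu; have := splin a Hu (sp0 S); rewrite addr0. Qed.
Lemma spN u : S u -> S (- u).
Proof. by move=> Hu; rewrite -scaleN1r; apply: spZ. Qed.

Program Definition ezero : E := @Endo _ _ _ _ nz0 (fun _ => 0) _ _.
Next Obligation. by rewrite scaler0 addr0. Qed.
Next Obligation. exact: sp0. Qed.
Program Definition eadd (f g : E) : E := @Endo _ _ _ _ nz0 (fun v => f v + g v) _ _.
Next Obligation. by rewrite !efun_lin scalerDr addrACA. Qed.
Next Obligation. by apply: spD; apply: efun_P. Qed.
Program Definition eopp (f : E) : E := @Endo _ _ _ _ nz0 (fun v => - f v) _ _.
Next Obligation. by rewrite !efun_lin opprD scalerN. Qed.
Next Obligation. by apply: spN; apply: efun_P. Qed.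
Program Definition eone : E := @Endo _ _ _ _ nz0 (fun v => v) _ _.
Program Definition emul (f g : E) : E := @Endo _ _ _ _ nz0 (fun v => f (g v)) _ _.
Next Obligation. by rewrite !efun_lin. Qed.
Next Obligation. by do 2 apply: efun_P. Qed.
Program Definition escale (a : F) (f : E) : E := @Endo _ _ _ _ nz0 (fun v => a *: f v) _ _.
Next Obligation. by rewrite !efun_lin scalerDr !scalerA mulrC. Qed.
Next Obligation. by apply: spZ; apply: efun_P. Qed.

Lemma eaddA : associative eadd.
Proof. by move=> f g h; apply: endo_ext => v /=; rewrite addrA. Qed.
Lemma eaddC : commutative eadd.
Proof. by move=> f g; apply: endo_ext => v /=; rewrite addrC. Qed.
Lemma eadd0 : left_id ezero eadd.
Proof. by move=> f; apply: endo_ext => v /=; rewrite add0r. Qed.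
Lemma eaddN : left_inverse ezero eopp eadd.
Proof. by move=> f; apply: endo_ext => v /=; rewrite addNr. Qed.
HB.instance Definition _ := GRing.isZmodule.Build E eaddA eaddC eadd0 eaddN.

Lemma emulA : associative emul.
Proof. by move=> f g h; apply: endo_ext. Qed.
Lemma emul1 : left_id eone emul.
Proof. by move=> f; apply: endo_ext. Qed.
Lemma emulr1 : right_id eone emul.
Proof. by move=> f; apply: endo_ext. Qed.
Lemma emulDl : left_distributive emul eadd.
Proof. by move=> f g h; apply: endo_ext. Qed.
Lemma emulDr : right_distributive emul eadd.
Proof. by move=> f g h; apply: endo_ext => v /=; rewrite efun_add. Qed.
Lemma eone_neq0 : eone != ezero.
Proof. by apply/eqP => /(congr1 (fun f : E => efun f v0)) /= /eqP; rewrite (negbTE nz0). Qed.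
HB.instance Definition _ := GRing.Zmodule_isNzRing.Build E emulA emul1 emulr1 emulDl emulDr eone_neq0.

Lemma escaleA a b (f : E) : escale a (escale b f) = escale (a * b) f.
Proof. by apply: endo_ext => v /=; rewrite scalerA. Qed.
Lemma escale1 : left_id 1 escale.
Proof. by move=> f; apply: endo_ext => v /=; rewrite scale1r. Qed.
Lemma escaleDr : right_distributive escale +%R.
Proof. by move=> a f g; apply: endo_ext => v /=; rewrite scalerDr. Qed.
Lemma escaleDl (f : E) : {morph escale^~ f : a b / a + b}.
Proof. by move=> a b; apply: endo_ext => v /=; rewrite scalerDl. Qed.
HB.instance Definition _ := GRing.Zmodule_isLmodule.Build F E escaleA escale1 escaleDr escaleDl.
Lemma escaleAl a (f g : E) : a *: (f * g) = (a *: f) * g.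
Proof. by apply: endo_ext. Qed.
HB.instance Definition _ := GRing.Lmodule_isLalgebra.Build F E escaleAl.
Lemma escaleAr a (f g : E) : a *: (f * g) = f * (a *: g).
Proof. by apply: endo_ext => v /=; rewrite efun_scale. Qed.
HB.instance Definition _ := GRing.Lalgebra_isAlgebra.Build F E escaleAr.

Lemma efunD (f g : E) v : (f + g) v = f v + g v. Proof. by []. Qed.
Lemma efunM (f g : E) v : (f * g) v = f (g v). Proof. by []. Qed.
Lemma efunZ a (f : E) v : (a *: f) v = a *: f v. Proof. by []. Qed.
Lemma efun1 v : (1 : E) v = v. Proof. by []. Qed.
Lemma efunE0 v : (0 : E) v = 0. Proof. by []. Qed.
Lemma efunN (f : E) v : (- f) v = - f v. Proof. by []. Qed.
Lemma efun_sum I (r : seq I) (Pr : pred I) (G : I -> E) v :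
  (\sum_(i <- r | Pr i) G i) v = \sum_(i <- r | Pr i) G i v.
Proof.
elim/big_rec2: _ => [|i y f _ <-]; by [].
Qed.
End Endo.


Section Peval.
Variables (F : fieldType) (A : algType F).
Implicit Types (p q : {poly F}) (a : A).
Lemma pevalD p q a : peval (p + q) a = peval p a + peval q a.
Proof. by rewrite /peval rmorphD. Qed.
Lemma pevalB p q a : peval (p - q) a = peval p a - peval q a.
Proof. by rewrite /peval rmorphB. Qed.
Lemma pevalM p q a : peval (p * q) a = peval p a * peval q a.
Proof. by rewrite /peval rmorphM. Qed.
Lemma pevalC c a : peval c%:P a = c%:A.
Proof. by rewrite /peval horner_algC. Qed.
Lemma pevalX a : peval 'X a = a.
Proof. by rewrite /peval horner_algX. Qed.
Lemma peval0 a : peval 0 a = 0.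
Proof. by rewrite /peval rmorph0. Qed.
Lemma peval1 a : peval 1 a = 1.
Proof. by rewrite /peval rmorph1. Qed.
Lemma peval_comm p q a : peval p a * peval q a = peval q a * peval p a.
Proof. by rewrite -!pevalM mulrC. Qed.
End Peval.
Lemma peval_lrmorph (F : fieldType) (A B : algType F) (f : {lrmorphism A -> B}) p a :
  f (peval p a) = peval p (f a).
Proof.
elim/poly_ind: p => [|p c IH]; first by rewrite !peval0 rmorph0.
rewrite !pevalD !pevalM !pevalX !pevalC rmorphD rmorphM; congr (_ * _ + _); [exact: IH | exact: rmorph_alg].
Qed.

Definition NF (F : fieldType) (A : algType F) (x y : A) (f : {poly {poly F}}) : A :=
  \sum_(j < size f) peval f`_j x * y ^+ j.

Section NFgen.
Variables (F : fieldType) (A : algType F) (x y : A).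
Local Notation NF := (NF x y).
Implicit Types (f : {poly {poly F}}) (p : {poly F}).

Lemma NF_ext f m : (size f <= m)%N -> NF f = \sum_(j < m) peval f`_j x * y ^+ j.
Proof.
move=> H; rewrite /NF -(subnKC H) big_split_ord /= [X in _ = _ + X]big1 ?addr0 // => j _.
by rewrite nth_default ?leq_addr // peval0 mul0r.
Qed.

Lemma NF0 : NF 0 = 0.
Proof. by rewrite /NF size_poly0 big_ord0. Qed.

Lemma NF1 : NF 1 = 1.
Proof. by rewrite /NF size_poly1 big_ord1 coefC /= peval1 mul1r expr0. Qed.

Lemma NFC p : NF p%:P = peval p x.
Proof.
rewrite (NF_ext (m := 1)) ?size_polyC_leq1 // big_ord1 coefC /=.
by rewrite expr0 mulr1.
Qed.

Lemma NF_lin (a : F) f1 f2 : NF (a%:P *: f1 + f2) = a *: NF f1 + NF f2.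
Proof.
set m := maxn (size f1) (size f2).
have H1 : (size f1 <= m)%N by rewrite leq_maxl.
have H2 : (size f2 <= m)%N by rewrite leq_maxr.
have H3 : (size (a%:P *: f1 + f2)%R <= m)%N.
  apply: (leq_trans (size_polyD _ _)); rewrite geq_max H2 andbT.
  exact: (leq_trans (size_scale_leq _ _)).
rewrite (NF_ext H1) (NF_ext H2) (NF_ext H3) scaler_sumr -big_split /=.
apply: eq_bigr => j _.
by rewrite coefD coefZ pevalD pevalM pevalC mulrDl mulr_algl scalerAl.
Qed.

Lemma NF_mulX f : x * NF f = NF (('X : {poly F})%:P * f).
Proof.
have H : (size (('X : {poly F})%:P * f)%R <= size f)%N.
  apply: (leq_trans (size_polyMleq _ _)).
  by rewrite -subn1 leq_subLR leq_add2r size_polyC_leq1.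
rewrite (NF_ext H) /NF mulr_sumr; apply: eq_bigr => j _.
by rewrite coefCM pevalM pevalX mulrA.
Qed.

Lemma NF_closure (S : A -> Prop) :
  S 1 -> S x -> S y -> (forall a b, S a -> S b -> S (a + b)) ->
  (forall (c : F) a, S a -> S (c *: a)) -> (forall a b, S a -> S b -> S (a * b)) ->
  forall f, S (NF f).
Proof.
move=> S1 Sx Sy SD SZ SM.
have S0 : S 0 by rewrite -(scale0r 1); apply: SZ.
have Sp p : S (peval p x).
  elim/poly_ind: p => [|p c IH]; first by rewrite peval0.
  by rewrite pevalD pevalM pevalX pevalC; apply: SD; [apply: SM | apply: SZ].
have Sy' n : S (y ^+ n) by elim: n => [|n IH]; rewrite ?expr0 // exprS; apply: SM.
move=> f; rewrite /NF; elim/big_ind: _ => //.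
by move=> j _; apply: SM.
Qed.
End NFgen.

Section Rel.
Variables (F : fieldType) (g : {poly F}) (A : algType F) (x y : A).
Hypothesis Hr : y * x - x * y = peval g x.
Local Notation G := (peval g x).

Lemma yx : y * x = x * y + G.
Proof. by rewrite -Hr addrC subrK. Qed.

Lemma comm_y p : y * peval p x = peval p x * y + peval (p^`() * g) x.
Proof.
elim/poly_ind: p => [|p c IH].
  by rewrite deriv0 mul0r !peval0 mulr0 mul0r addr0.
rewrite derivMXaddC !pevalD !pevalM !pevalD !pevalM !pevalX !pevalC.
have Gx : G * x = x * G by have := peval_comm g 'X x; rewrite pevalX.
rewrite mulrDr mulrA IH mulrDl -mulrA yx.
rewrite pevalM -(mulrA _ G x) Gx mulr_algr !mulrDl mulr_algl !mulrDr !mulrA.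
rewrite -!addrA; congr (_ + _); by rewrite [RHS]addrC -addrA.
Qed.

Lemma NF_mulY f :
  y * NF x y f = NF x y ('X * f + map_poly (fun p => p^`() * g) f).
Proof.
set f' := map_poly _ f.
have Hf' : (size f' <= size f)%N.
  by rewrite /f' map_polyE (leq_trans (size_Poly _)) // size_map.
have HX : (size ('X * f)%R <= (size f).+1)%N.
  rewrite mulrC; have [->|nz] := eqVneq f 0; first by rewrite mul0r size_poly0.
  by rewrite size_mulX.
have H : (size ('X * f + f')%R <= (size f).+1)%N.
  apply: (leq_trans (size_polyD _ _)); rewrite geq_max HX /=.
  exact: (leq_trans Hf').
rewrite (NF_ext _ _ H).
under eq_bigr => j _ do rewrite coefD pevalD mulrDl.
rewrite big_split /= -(NF_ext _ _ (leq_trans Hf' (leqnSn _))) (NF_ext _ _ Hf').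
rewrite big_ord_recl coefXM eqxx peval0 mul0r add0r.
rewrite /NF mulr_sumr -big_split /=; apply: eq_bigr => j _.
rewrite coefXM /= /bump /= add1n /f' coef_map_id0; last by rewrite deriv0 mul0r.
by rewrite mulrA comm_y mulrDl exprS mulrA.
Qed.
End Rel.

Section Gen.
Variables (F : fieldType) (g : {poly F}) (D : algType F) (x y : D).
Hypothesis HD : is_Ah g x y.

Definition Npred : D -> Prop := fun a => exists f, a = NF x y f.
Lemma Npred0 : Npred 0. Proof. by exists 0; rewrite NF0. Qed.
Lemma Npredlin (a : F) u v : Npred u -> Npred v -> Npred (a *: u + v).
Proof. by move=> [f1 ->] [f2 ->]; exists (a%:P *: f1 + f2); rewrite NF_lin. Qed.
Definition Nsp : subsp D := Subsp Npred0 Npredlin.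
Definition TTsp : subsp D := @Subsp _ _ (fun _ => True) I (fun _ _ _ _ _ => I).
Definition nzD : (1 : D) != 0 := oner_neq0 D.
Local Notation EN := (@endo F D Nsp 1 nzD).
Local Notation ET := (@endo F D TTsp 1 nzD).

Program Definition Lx : EN := @Endo _ _ Nsp _ nzD (fun v => x * v) _ _.
Next Obligation. by rewrite mulrDr scalerAr. Qed.
Next Obligation. by case: H => f ->; exists (('X : {poly F})%:P * f); rewrite NF_mulX. Qed.
Program Definition Ly : EN := @Endo _ _ Nsp _ nzD (fun v => y * v) _ _.
Next Obligation. by rewrite mulrDr scalerAr. Qed.
Next Obligation.
by case: H => f ->; exists ('X * f + map_poly (fun p => p^`() * g) f); rewrite (NF_mulY HD.1).
Qed.

Lemma peval_Lx p v : (peval p Lx : EN) v = peval p x * v.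
Proof.
elim/poly_ind: p v => [|p c IH] v; first by rewrite !peval0 efunE0 mul0r.
by rewrite !pevalD !pevalM !pevalX !pevalC efunD efunM IH efunZ efun1 /= mulrDl mulr_algl mulrA.
Qed.

Lemma rel_N : Ly * Lx - Lx * Ly = peval g Lx.
Proof.
apply: endo_ext => v; rewrite efunD efunN !efunM peval_Lx /=.
by rewrite !mulrA -mulrBl HD.1.
Qed.

Program Definition Lmul (a : D) : ET := @Endo _ _ TTsp _ nzD (fun v => a * v) _ _.
Next Obligation. by rewrite mulrDr scalerAr. Qed.
Lemma Lmul_lin : linear Lmul.
Proof. by move=> c u v; apply: endo_ext => w; rewrite efunD efunZ /= mulrDl scalerAl. Qed.
Lemma Lmul_mon : monoid_morphism Lmul.
Proof. by split; [apply: endo_ext => w /=; rewrite mul1r | move=> a b; apply: endo_ext => w /=; rewrite mulrA]. Qed.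
HB.instance Definition _ := GRing.isLinear.Build F D ET *:%R Lmul Lmul_lin.
HB.instance Definition _ := GRing.isMonoidMorphism.Build D ET Lmul Lmul_mon.

Program Definition forget (e : EN) : ET := @Endo _ _ TTsp _ nzD (efun e) (efun_lin e) _.
Lemma forget_lin : linear forget.
Proof. by move=> c u v; apply: endo_ext. Qed.
Lemma forget_mon : monoid_morphism forget.
Proof. by split; [apply: endo_ext | move=> a b; apply: endo_ext]. Qed.
HB.instance Definition _ := GRing.isLinear.Build F EN ET *:%R forget forget_lin.
HB.instance Definition _ := GRing.isMonoidMorphism.Build EN ET forget forget_mon.

Lemma NF_all a : Npred a.
Proof.
have [Phi [Px Py _]] := HD.2 _ _ _ rel_N.
have relT : Lmul y * Lmul x - Lmul x * Lmul y = peval g (Lmul x).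
  by rewrite -!rmorphM -rmorphB HD.1; exact: (peval_lrmorph Lmul).
have [f0 [_ _ U]] := HD.2 _ _ _ relT.
have e1 : (forget \o Phi) =1 f0.
  by apply: U; rewrite /= ?Px ?Py; apply: endo_ext.
have e2 := U Lmul erefl erefl.
have E : efun (Phi a) 1 = a.
  have := congr1 (fun e : ET => efun e 1) (etrans (e1 a) (esym (e2 a))).
  by rewrite /= mulr1.
rewrite -E; apply: (efun_P (Phi a)).
by exists 1; rewrite NF1.
Qed.
End Gen.

Section Comm.
Variables (F : fieldType) (g : {poly F}) (D : algType F) (x y : D).
Hypothesis HD : is_Ah g x y.
Local Notation G := (peval g x).

Lemma closure_all (S : D -> Prop) :
  S 1 -> S x -> S y -> (forall a b, S a -> S b -> S (a + b)) ->
  (forall (c : F) a, S a -> S (c *: a)) -> (forall a b, S a -> S b -> S (a * b)) ->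
  forall a, S a.
Proof.
move=> S1 Sx Sy SD SZ SM a; have [f ->] := NF_all HD a.
exact: NF_closure.
Qed.

Lemma GL d : exists c, d * G = G * c.
Proof.
apply: (closure_all (S := fun d => exists c, d * G = G * c)) => {d}.
- by exists 1; rewrite mul1r mulr1.
- by exists x; have := peval_comm g 'X x; rewrite pevalX.
- exists (y + peval g^`() x); rewrite (comm_y HD.1) pevalM mulrDr.
  by rewrite [peval g^`() x * _]peval_comm.
- by move=> a b [c1 e1] [c2 e2]; exists (c1 + c2); rewrite mulrDl e1 e2 mulrDr.
- by move=> c a [c1 e1]; exists (c *: c1); rewrite -scalerAl e1 scalerAr.
- by move=> a b [c1 e1] [c2 e2]; exists (c1 * c2); rewrite -mulrA e2 mulrA e1 mulrA.
Qed.

Lemma fixa a : (exists c, a * x - x * a = G * c) -> (exists c, a * y - y * a = G * c) ->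
  forall b, exists c, a * b - b * a = G * c.
Proof.
move=> Hx Hy.
apply: (closure_all (S := fun b => exists c, a * b - b * a = G * c)) => //.
- by exists 0; rewrite mulr1 mul1r subrr mulr0.
- move=> b1 b2 [c1 e1] [c2 e2]; exists (c1 + c2).
  by rewrite mulrDr mulrDl opprD addrACA e1 e2 mulrDr.
- move=> c b [c1 e1]; exists (c *: c1).
  by rewrite -scalerAr -scalerAl -scalerBr e1 scalerAr.
- move=> b1 b2 [c1 e1] [c2 e2].
  have [c' e'] := GL b1.
  exists (c1 * b2 + c' * c2).
  have -> : a * (b1 * b2) - b1 * b2 * a = (a * b1 - b1 * a) * b2 + b1 * (a * b2 - b2 * a).
    by rewrite mulrBl mulrBr !mulrA addrA subrK.
  by rewrite e1 e2 mulrA e' mulrDr !mulrA.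
Qed.

Lemma comm_ideal a b : exists c, a * b - b * a = G * c.
Proof.
have Cx : forall b, exists c, x * b - b * x = G * c.
  apply: fixa; first by exists 0; rewrite subrr mulr0.
  by exists (-1); rewrite mulrN1 -HD.1 opprB.
have Cy : forall b, exists c, y * b - b * y = G * c.
  apply: fixa; last by exists 0; rewrite subrr mulr0.
  by exists 1; rewrite mulr1 HD.1.
apply: fixa.
- by have [c e] := Cx a; exists (- c); rewrite mulrN -e opprB.
- by have [c e] := Cy a; exists (- c); rewrite mulrN -e opprB.
Qed.
End Comm.

Definition V2 (F : fieldType) : Type := {poly {poly F}}.
HB.instance Definition _ (F : fieldType) := GRing.Zmodule.on (V2 F).

Section V2lmod.
Variable F : fieldType.
Definition v2scale (c : F) (v : V2 F) : V2 F := (c%:P)%:P * (v : {poly {poly F}}).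
Lemma v2scaleA a b v : v2scale a (v2scale b v) = v2scale (a * b) v.
Proof. by rewrite /v2scale mulrA -!polyCM. Qed.
Lemma v2scale1 : left_id 1 v2scale.
Proof. by move=> v; rewrite /v2scale mul1r. Qed.
Lemma v2scaleDr : right_distributive v2scale +%R.
Proof. by move=> a u v; rewrite /v2scale mulrDr. Qed.
Lemma v2scaleDl v : {morph v2scale^~ v : a b / a + b}.
Proof. by move=> a b; rewrite /v2scale !polyCD mulrDl. Qed.
HB.instance Definition _ := GRing.Zmodule_isLmodule.Build F (V2 F) v2scaleA v2scale1 v2scaleDr v2scaleDl.
End V2lmod.

Section Model.
Variables (F : fieldType) (g : {poly F}).
Definition TT2 : subsp (V2 F) := @Subsp _ _ (fun _ => True) I (fun _ _ _ _ _ => I).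
Definition one2 : V2 F := (1 : {poly {poly F}}).
Lemma nz2 : one2 != 0. Proof. exact: oner_neq0. Qed.
Local Notation E := (@endo F (V2 F) TT2 one2 nz2).

Lemma v2scaleE (c : F) (v : V2 F) : c *: v = ((c%:P)%:P * (v : {poly {poly F}}) : V2 F).
Proof. by []. Qed.

Definition md (v : {poly {poly F}}) : {poly {poly F}} := map_poly (fun p => p^`()) v.
Lemma mdD u v : md (u + v) = md u + md v.
Proof. by apply/polyP => i; rewrite coefD !coef_map_id0 ?deriv0 // coefD derivD. Qed.
Lemma mdM q v : md (q%:P * v) = q^`()%:P * v + q%:P * md v.
Proof.
apply/polyP => i; rewrite coefD !coefCM !coef_map_id0 ?deriv0 //.
by rewrite coefCM derivM.
Qed.

Program Definition eX : E := @Endo _ _ TT2 _ nz2 (fun v => (('X : {poly F})%:P * (v : {poly {poly F}}) : V2 F)) _ _.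
Next Obligation. rewrite !v2scaleE /=. change (('X : {poly F})%:P * ((a%:P)%:P * u + v) = (a%:P)%:P * (('X : {poly F})%:P * u) + ('X : {poly F})%:P * v). ring. Qed.
Program Definition eY : E := @Endo _ _ TT2 _ nz2
  (fun v => ((g%:P * md v + 'X * (v : {poly {poly F}})) : V2 F)) _ _.
Next Obligation.
rewrite !v2scaleE /=.
change (g%:P * md ((a%:P)%:P * u + v) + 'X * ((a%:P)%:P * u + v) = (a%:P)%:P * (g%:P * md u + 'X * u) + (g%:P * md v + 'X * v)).
rewrite mdD mdM derivC polyC0 mul0r add0r; ring.
Qed.

Lemma peval_eX p (v : V2 F) : (peval p eX : E) v = (p%:P * (v : {poly {poly F}}) : V2 F).
Proof.
elim/poly_ind: p v => [|p c IH] v; first by rewrite !peval0 efunE0 mul0r.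
rewrite !pevalD !pevalM !pevalX !pevalC efunD efunM IH efunZ efun1 v2scaleE /=.
rewrite polyCD polyCM. change (p%:P * (('X : {poly F})%:P * v) + (c%:P)%:P * v = (p%:P * ('X : {poly F})%:P + (c%:P)%:P) * v). ring.
Qed.

Lemma relE : eY * eX - eX * eY = peval g eX.
Proof.
apply: endo_ext => v; rewrite efunD efunN !efunM peval_eX /=.
change (g%:P * md (('X : {poly F})%:P * v) + 'X * (('X : {poly F})%:P * v) - ('X : {poly F})%:P * (g%:P * md v + 'X * v) = g%:P * v).
rewrite mdM derivX; ring.
Qed.

Definition app (e : E) (v : {poly {poly F}}) : {poly {poly F}} := efun e v.

Lemma size_md v : (size (md v) <= size v)%N.
Proof. by rewrite /md map_polyE (leq_trans (size_Poly _)) // size_map. Qed.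

Lemma eY_size v : v != 0 -> size (app eY v) = (size v).+1 /\ lead_coef (app eY v) = lead_coef v.
Proof.
move=> nz.
have H1 : (size (g%:P * md v)%R <= size v)%N.
  apply: (leq_trans (size_polyMleq _ _)).
  by rewrite -subn1 leq_subLR (leq_add (size_polyC_leq1 _) (size_md v)).
have H2 : size ('X * v)%R = (size v).+1 by rewrite mulrC size_mulX.
rewrite /app /= addrC; split.
  by rewrite size_polyDl H2 // ltnS.
by rewrite lead_coefDl ?H2 ?ltnS // mulrC lead_coefMX.
Qed.

Lemma app_mul (a b : E) v : app (a * b) v = app a (app b v).
Proof. by []. Qed.

Lemma eYn_size n v : v != 0 ->
  size (app (eY ^+ n) v) = (size v + n)%N /\ lead_coef (app (eY ^+ n) v) = lead_coef v.
Proof.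
move=> nz; elim: n => [|n [IHs IHl]]; first by rewrite expr0 addn0.
have nz' : app (eY ^+ n) v != 0.
  by rewrite -size_poly_gt0 IHs addn_gt0 size_poly_gt0 nz.
have [s l] := eY_size nz'.
by rewrite exprS app_mul s l IHs IHl addnS.
Qed.

Lemma app_NF f v : app (NF eX eY f) v = \sum_(j < size f) (f`_j)%:P * app (eY ^+ j) v.
Proof.
rewrite /NF /app efun_sum; apply: eq_bigr => j _.
by rewrite efunM peval_eX.
Qed.

Lemma NF_lead f v : f != 0 -> v != 0 ->
  size (app (NF eX eY f) v) = (size v + (size f).-1)%N /\ lead_coef (app (NF eX eY f) v) = lead_coef f * lead_coef v.
Proof.
move=> fnz vnz.
have sv : (0 < size v)%N by rewrite size_poly_gt0.
pose T j := (f`_j)%:P * app (eY ^+ j) v.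
have sT j : (size (T j) <= size v + j)%N.
  apply: (leq_trans (size_polyMleq _ _)).
  rewrite (eYn_size j vnz).1 -subn1 leq_subLR.
  by rewrite (leq_add (size_polyC_leq1 _) (leqnn _)).
have part k : (size (\sum_(j < k) T j)%R <= (size v + k).-1)%N.
  elim: k => [|k IH]; first by rewrite big_ord0 size_poly0.
  rewrite big_ord_recr /=; apply: (leq_trans (size_polyD _ _)).
  rewrite geq_max addnS /= (leq_trans IH) ?leq_pred //=; exact: sT.
have [n Hn] : exists n, size f = n.+1.
  by exists (size f).-1; rewrite prednK // size_poly_gt0.
have lf : f`_n = lead_coef f by rewrite lead_coefE Hn.
have lnz : f`_n != 0 by rewrite lf lead_coef_eq0.
have sTn : size (T n) = (size v + n)%N by rewrite /T size_Cmul // (eYn_size n vnz).1.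
have lTn : lead_coef (T n) = lead_coef f * lead_coef v.
  by rewrite /T lead_coefM lead_coefC lf (eYn_size n vnz).2.
have lt : (size (\sum_(j < n) T j)%R < size (T n))%N.
  by rewrite sTn (leq_ltn_trans (part n)) // ltn_predL addn_gt0 sv.
rewrite app_NF Hn big_ord_recr /=.
rewrite -/(T n).
have -> : \sum_(i < n) (f`_(widen_ord (leqnSn n) i))%:P * app (eY ^+ widen_ord (leqnSn n) i) v
  = \sum_(i < n) T i by [].
split; first by rewrite addrC size_polyDl // sTn.
by rewrite lead_coefDr.
Qed.
End Model.

Section Final.
Variables (F : fieldType) (g : {poly F}) (D : algType F) (x y : D).
Hypothesis HD : is_Ah g x y.
Local Notation E := (@endo F (V2 F) (TT2 F) (one2 F) (nz2 F)).

Lemma rho_ex : exists rho : {lrmorphism D -> E}, rho x = eX F /\ rho y = eY g.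
Proof. by have [rho [rx ry _]] := HD.2 _ _ _ (relE g); exists rho. Qed.

Lemma rho_NF (rho : {lrmorphism D -> E}) : rho x = eX F -> rho y = eY g ->
  forall f, rho (NF x y f) = NF (eX F) (eY g) f.
Proof.
move=> rx ry f; rewrite /NF rmorph_sum; apply: eq_bigr => j _.
rewrite rmorphM; congr (_ * _); last by rewrite rmorphXn; congr (_ ^+ _); exact: ry.
rewrite -rx; exact: peval_lrmorph.
Qed.

Lemma one2_nz : (one2 F : {poly {poly F}}) != 0. Proof. exact: oner_neq0. Qed.

Lemma NF_nz f : f != 0 -> NF x y f != 0.
Proof.
move=> fnz; have [rho [rx ry]] := rho_ex.
apply/eqP => e.
have := NF_lead g fnz one2_nz; rewrite -(rho_NF rx ry) e rmorph0.
have -> : app 0 (one2 F) = 0 by [].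
by case=> H _; move: H; rewrite size_poly0 /one2 size_poly1 => /eqP.
Qed.

Lemma elem_NF a : a != 0 -> exists2 f, f != 0 & a = NF x y f.
Proof.
move=> anz; have [f ef] := NF_all HD a; exists f => //.
by apply: contraNneq anz => f0; rewrite ef f0 NF0.
Qed.

Lemma domainD (a b : D) : a != 0 -> b != 0 -> a * b != 0.
Proof.
move=> /elem_NF [fa fanz ->] /elem_NF [fb fbnz ->].
have [rho [rx ry]] := rho_ex.
apply/eqP => e.
have hM : forall a1 b1 v, app (rho (a1 * b1)) v = app (rho a1) (app (rho b1) v).
  by move=> a1 b1 v; rewrite rmorphM.
have h0 : forall v, app (rho 0) v = 0 by move=> v; rewrite rmorph0.
have := congr1 (fun z => app (rho z) (one2 F)) e.
rewrite /= hM h0 !(rho_NF rx ry) => e'.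
have [s1 _] := NF_lead g fbnz one2_nz.
have w_nz : app (NF (eX F) (eY g) fb) (one2 F) != 0.
  by rewrite -size_poly_gt0 s1 addn_gt0 size_poly_gt0 one2_nz.
have [s2 _] := NF_lead g fanz w_nz.
move: s2; rewrite e' size_poly0 => /esym/eqP; rewrite addn_eq0 size_poly_eq0.
by rewrite (negbTE w_nz).
Qed.

Lemma unitD (c d : D) : c * d = 1 -> exists2 lam : F, lam != 0 & c = lam%:A.
Proof.
move=> e.
have cnz : c != 0 by apply/eqP => c0; move: (oner_neq0 D); rewrite -e c0 mul0r eqxx.
have dnz : d != 0 by apply/eqP => d0; move: (oner_neq0 D); rewrite -e d0 mulr0 eqxx.
move: e; case/elem_NF: cnz => fc fcnz -> {c}; case/elem_NF: dnz => fd fdnz -> {d} e.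
have [rho [rx ry]] := rho_ex.
have hM : forall a1 b1 v, app (rho (a1 * b1)) v = app (rho a1) (app (rho b1) v).
  by move=> a1 b1 v; rewrite rmorphM.
have h1 : forall v, app (rho 1) v = v by move=> v; rewrite rmorph1.
have := congr1 (fun z => app (rho z) (one2 F)) e.
rewrite /= hM h1 !(rho_NF rx ry) => e'.
have [s1 l1] := NF_lead g fdnz one2_nz.
have w_nz : app (NF (eX F) (eY g) fd) (one2 F) != 0.
  by rewrite -size_poly_gt0 s1 addn_gt0 size_poly_gt0 one2_nz.
have [s2 l2] := NF_lead g fcnz w_nz.
move: s2 l2; rewrite e' s1 l1 /one2 size_poly1 lead_coef1 mulr1 => s2 l2.
have sfc := size_poly_gt0 fc; have sfd := size_poly_gt0 fd.
rewrite fcnz in sfc; rewrite fdnz in sfd.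
have sc : size fc = 1%N by lia.
have sd : size fd = 1%N by lia.
have fcE : fc = (fc`_0)%:P by apply: size1_polyC; rewrite sc.
have lc : lead_coef fc = fc`_0 by rewrite lead_coefE sc.
have fdE : fd = (fd`_0)%:P by apply: size1_polyC; rewrite sd.
have ld : lead_coef fd = fd`_0 by rewrite lead_coefE sd.
rewrite lc ld in l2.
have c0nz : fc`_0 != 0 by rewrite -lc lead_coef_eq0.
have d0nz : fd`_0 != 0 by rewrite -ld lead_coef_eq0.
have s0 : size (fc`_0) = 1%N.
  have := size_mul c0nz d0nz; rewrite -l2 size_poly1.
  move: (size_poly_gt0 (fc`_0)) (size_poly_gt0 (fd`_0)); rewrite c0nz d0nz.
  by case: (size (fc`_0)) => [|[|k]] //; case: (size (fd`_0)) => [|[|m]] //= _ _; rewrite addnS.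
exists (fc`_0)`_0.
  by move: c0nz; rewrite -lead_coef_eq0 lead_coefE s0.
set l := (fc`_0)`_0.
have fl : fc`_0 = l%:P by apply: size1_polyC; rewrite s0.
by rewrite fcE NFC fl pevalC.
Qed.
End Final.

Theorem lemma8p1 (F : fieldType) (g h : {poly F})
  (Ah : algType F) (xh yh : Ah) (Ag : algType F) (xg yg : Ag)
  (HAh : is_Ah h xh yh) (HAg : is_Ah g xg yg)
  (theta : {lrmorphism Ah -> Ag}) (Htheta : bijective theta) :
  exists lambda : F, lambda != 0 /\ theta (peval h xh) = lambda *: peval g xg.
Proof.
pose th : Ah -> Ag := theta.
have thM a b : th (a * b) = th a * th b by exact: rmorphM.
have thB a b : th (a - b) = th a - th b by exact: rmorphB.
change (exists lambda : F, lambda != 0 /\ th (peval h xh) = lambda *: peval g xg).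
have [c1 e1] := comm_ideal HAg (th yh) (th xh).
have eu : th (peval h xh) = peval g xg * c1 by rewrite -HAh.1 thB !thM.
case: Htheta => phi phiK thetaK.
have thK z : th (phi z) = z by exact: thetaK.
have [c2 e2] := comm_ideal HAh (phi yg) (phi xg).
have eg : peval g xg = th (peval h xh) * th c2.
  by rewrite -thM -e2 thB !thM !thK HAg.1.
have [g0|gnz] := eqVneq g 0.
  exists 1; split; first exact: oner_neq0.
  by rewrite eu g0 peval0 mul0r scaler0.
have Gnz : peval g xg != 0 by rewrite -(NFC xg yg) (NF_nz HAg) // polyC_eq0.
have e3 : c1 * th c2 = 1.
  apply/eqP; rewrite -subr_eq0; apply/eqP.
  apply/eqP; apply: contraT => nz.
  have := domainD HAg Gnz nz.
  by rewrite mulrBr mulr1 mulrA -eu -eg subrr eqxx.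
have [lam lnz ec] := unitD HAg e3.
exists lam; split => //.
by rewrite eu ec mulr_algr.
Qed.
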